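(* Let $n\ge 1$, let $\mathbf{F}=(f_{ij})$ be an $n\times n$ matrix with nonnegative entries ($f_{ij}$ is the flow from node $j$ to node $i$), let $\vec z=(z_1,\dots,z_n)^{\mathrm T}$ be a nonnegative column vector of boundary inputs and $\vec y=(y_1,\dots,y_n)$ a nonnegative row vector of boundary outputs. Define $T^{\mathrm{in}}_i=\sum_{j=1}^n f_{ij}+z_i$ and $T^{\mathrm{out}}_j=\sum_{i=1}^n f_{ij}+y_j$, assume all of these are positive, and assume the system is at steady state, i.e. $T^{\mathrm{in}}_\ell=T^{\mathrm{out}}_\ell$ for every $\ell$. Let $\mathbf{G}'=(g'_{ij})$ with $g'_{ij}=f_{ij}/T^{\mathrm{in}}_i$ and $\mathbf{G}=(g_{ij})$ with $g_{ij}=f_{ij}/T^{\mathrm{out}}_j$, and assume the series $\mathbf{N}'=\sum_{m\ge0}\mathbf{G}'^m=(\mathbf I-\mathbf G')^{-1}$ and $\mathbf{N}=\sum_{m\ge0}\mathbf{G}^m=(\mathbf I-\mathbf G)^{-1}$ converge. Then the realized input ratio $$I/D_{\mathrm{realized,input}}=\frac{\sum_{i=1}^n\bigl(\vec y(\mathbf N'-\mathbf I-\mathbf G')\bigr)_i}{\sum_{i=1}^n(\vec y\mathbf G')_i}$$ and the realized output ratio $$I/D_{\mathrm{realized,output}}=\frac{\sum_{i=1}^n\bigl((\mathbf N-\mathbf I-\mathbf G)\vec z\bigr)_i}{\sum_{i=1}^n(\mathbf G\vec z)_i}$$ are identical.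
   Context: This is the setting of ecological network (throughflow) analysis: nodes are ecosystem compartments, $\mathbf I$ is the $n\times n$ identity matrix. $\mathbf G'$ and $\mathbf G$ are the input- and output-oriented direct flow intensity matrices, and $\mathbf N'$, $\mathbf N$ the corresponding integral flow intensity matrices; in the model setting the paper takes the power series defining them to converge. The ratios compare indirect flow (terms $m\ge2$ of the series) to direct flow (term $m=1$), weighted by the observed boundary vectors. *)

(* Defs.v *)
From HB Require Import structures.
From mathcomp Require Import all_boot all_order all_algebra.
From mathcomp Require Import all_classical all_reals all_analysis.
Set Implicit Arguments. Unset Strict Implicit. Unset Printing Implicit Defensive.
Import Order.TTheory GRing.Theory Num.Theory.
Local Open Scope ring_scope.
Local Open Scope classical_set_scope.

(* F i j = flow from node j to node i; z : column vector of boundary inputs;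
   y : row vector of boundary outputs. *)
Definition Tin {R : realType} {n : nat} (F : 'M[R]_n) (z : 'cV[R]_n) (i : 'I_n) : R :=
  \sum_(j < n) F i j + z i 0.
Definition Tout {R : realType} {n : nat} (F : 'M[R]_n) (y : 'rV[R]_n) (j : 'I_n) : R :=
  \sum_(i < n) F i j + y 0 j.

Definition Gin {R : realType} {n : nat} (F : 'M[R]_n) (z : 'cV[R]_n) : 'M[R]_n :=
  \matrix_(i, j) (F i j / Tin F z i).
Definition Gout {R : realType} {n : nat} (F : 'M[R]_n) (y : 'rV[R]_n) : 'M[R]_n :=
  \matrix_(i, j) (F i j / Tout F y j).

Definition mxpsum {R : realType} {n : nat} (A : 'M[R]_n.+1) (k : nat) : 'M[R]_n.+1 :=
  \sum_(m < k) A ^+ m.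

Import numFieldNormedType.Exports.
Definition mxseries_to {R : realType} {n : nat} (A N : 'M[R]_n.+1) : Prop :=
  forall i j : 'I_n.+1, (fun k => mxpsum A k i j) @ \oo --> N i j.

(* Main.v *)
Require Import Defs.
From HB Require Import structures.
From mathcomp Require Import all_boot all_order all_algebra.
From mathcomp Require Import all_classical all_reals all_analysis.
Import Order.TTheory GRing.Theory Num.Theory.
Import numFieldNormedType.Exports.
Local Open Scope ring_scope.
Local Open Scope classical_set_scope.

Definition lin {R : realType} {n : nat} (c M : 'M[R]_n) : R :=
  \sum_(i < n) \sum_(j < n) c i j * M i j.

Lemma lin_cvg (R : realType) (n : nat) (c A N : 'M[R]_n.+1) :
  mxseries_to A N ->
  (fun k => lin c (mxpsum A k)) @ \oo --> lin c N.
Proof.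
move=> H; rewrite /lin.
apply: (cvg_big (op := +%R) (x0 := 0) (P := xpredT) add_continuous) => // i _.
apply: (cvg_big (op := +%R) (x0 := 0) (P := xpredT) add_continuous) => // j _.
by apply: cvgMl_tmp; apply: H.
Qed.

Lemma lin_lim (R : realType) (n : nat) (c1 c2 A B N1 N2 : 'M[R]_n.+1) :
  mxseries_to A N1 -> mxseries_to B N2 ->
  (forall k, lin c1 (mxpsum A k) = lin c2 (mxpsum B k)) ->
  lin c1 N1 = lin c2 N2.
Proof.
move=> H1 H2 E.
have h1 := @lin_cvg _ _ c1 _ _ H1.
have h2 := @lin_cvg _ _ c2 _ _ H2.
have e : (fun k => lin c1 (mxpsum A k)) = (fun k => lin c2 (mxpsum B k)).
  by apply: funext => k; exact: E.
rewrite e in h1.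
exact: (cvg_unique _ h1 h2).
Qed.

Lemma linB (R : realType) (n : nat) (c A B : 'M[R]_n) :
  lin c (A - B) = lin c A - lin c B.
Proof.
rewrite /lin -sumrB; apply: eq_bigr => i _; rewrite -sumrB.
by apply: eq_bigr => j _; rewrite !mxE mulrBr.
Qed.

Definition cy {R : realType} {n : nat} (y : 'rV[R]_n) : 'M[R]_n :=
  \matrix_(i, j) y 0 i.
Definition cz {R : realType} {n : nat} (z : 'cV[R]_n) : 'M[R]_n :=
  \matrix_(i, j) z j 0.

Lemma linyE (R : realType) (n : nat) (y : 'rV[R]_n) (M : 'M[R]_n) :
  lin (cy y) M = (y *m M *m (const_mx 1 : 'cV[R]_n)) 0 0.
Proof.
rewrite /lin [RHS]mxE exchange_big /=; apply: eq_bigr => j _.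
rewrite [X in _ = X * _]mxE mxE mulr1; apply: eq_bigr => i _.
by rewrite mxE.
Qed.

Lemma linzE (R : realType) (n : nat) (z : 'cV[R]_n) (M : 'M[R]_n) :
  lin (cz z) M = ((const_mx 1 : 'rV[R]_n) *m M *m z) 0 0.
Proof.
rewrite /lin -mulmxA [RHS]mxE; apply: eq_bigr => i _.
rewrite mxE mul1r [RHS]mxE; apply: eq_bigr => j _; by rewrite mxE mulrC.
Qed.

Lemma sumyE (R : realType) (n : nat) (y : 'rV[R]_n) (M : 'M[R]_n) :
  \sum_(i < n) (y *m M) 0 i = lin (cy y) M.
Proof.
rewrite linyE [RHS]mxE; apply: eq_bigr => i _; by rewrite [X in _ = _ * X]mxE mulr1.
Qed.

Lemma sumzE (R : realType) (n : nat) (z : 'cV[R]_n) (M : 'M[R]_n) :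
  \sum_(i < n) (M *m z) i 0 = lin (cz z) M.
Proof.
rewrite linzE -mulmxA [RHS]mxE; apply: eq_bigr => i _; by rewrite [X in _ = X * _]mxE mul1r.
Qed.

Theorem theorem1 (R : realType) (n : nat)
  (F : 'M[R]_n.+1) (z : 'cV[R]_n.+1) (y : 'rV[R]_n.+1)
  (N' N : 'M[R]_n.+1) :
  (forall i j, 0 <= F i j) ->
  (forall i, 0 <= z i 0) ->
  (forall j, 0 <= y 0 j) ->
  (forall i, 0 < Tin F z i) ->
  (forall j, 0 < Tout F y j) ->
  (forall l, Tin F z l = Tout F y l) ->
  mxseries_to (Gin F z) N' ->
  mxseries_to (Gout F y) N ->
  (\sum_(i < n.+1) (y *m (N' - 1%:M - Gin F z)) 0 i)
    / (\sum_(i < n.+1) (y *m Gin F z) 0 i)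
  = (\sum_(i < n.+1) ((N - 1%:M - Gout F y) *m z) i 0)
    / (\sum_(i < n.+1) (Gout F y *m z) i 0).
Proof.
move=> _ _ _ Hin Hout Heq HN' HN.
set T := \row_j Tout F y j.
set D := diag_mx T.
set Gi := Gin F z; set Go := Gout F y.
have hF1 : Go *m D = F.
  apply/matrixP => i j; rewrite mul_mx_diag !mxE divfK //.
  by apply: lt0r_neq0.
have hF2 : D *m Gi = F.
  apply/matrixP => i j; rewrite mul_diag_mx !mxE -Heq mulrC divfK //.
  by apply: lt0r_neq0.
have hy : y = (const_mx 1 : 'rV[R]_n.+1) *m ((1 - Go) *m D).
  rewrite mulmxBl mul1mx hF1 mulmxBr.
  apply/matrixP => i j; rewrite (ord1 i) mul_mx_diag !mxE mul1r /Tout.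
  rewrite [X in _ = _ - X](_ : _ = \sum_(k < n.+1) F k j).
    by rewrite addrC addKr.
  by apply: eq_bigr => k _; rewrite mxE mul1r.
have hz : z = (1 - Go) *m D *m (const_mx 1 : 'cV[R]_n.+1).
  rewrite mulmxBl mul1mx hF1 -hF2 mulmxBl.
  rewrite hF2.
  apply/matrixP => i j; rewrite (ord1 j) mul_diag_mx !mxE mulr1 -Heq /Tin.
  rewrite [X in _ = _ - X](_ : _ = \sum_(k < n.+1) F i k).
    by rewrite addrC addKr.
  by apply: eq_bigr => k _; rewrite mxE mulr1.
have hDX : forall m, D *m Gi ^+ m = Go ^+ m *m D.
  elim=> [|m IH]; first by rewrite !expr0 mulmx1 mul1mx.
  by rewrite exprS mulmxE mulrA -mulmxE hF2 -hF1 -mulmxA IH mulmxA exprS.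
have key : forall m, lin (cy y) (Gi ^+ m) = lin (cz z) (Go ^+ m).
  move=> m; rewrite linyE linzE hy hz.
  congr (_ 0 0).
  have c : Go ^+ m *m (1 - Go) = (1 - Go) *m Go ^+ m.
    by rewrite mulmxE mulrBr mulrBl mulr1 mul1r -exprS exprSr.
  by rewrite -!mulmxA (mulmxA D) hDX -!mulmxA (mulmxA (Go ^+ m) (1 - Go)) c !mulmxA.
have keyS : forall k, lin (cy y) (mxpsum Gi k) = lin (cz z) (mxpsum Go k).
  move=> k; rewrite linyE linzE /mxpsum.
  rewrite mulmx_sumr mulmx_suml mulmx_sumr mulmx_suml !summxE.
  by apply: eq_bigr => m _; rewrite -linyE -linzE key.
have hlim := @lin_lim _ _ _ _ _ _ _ _ HN' HN keyS.
rewrite !sumyE !sumzE !linB hlim.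
have k0 := key 0%N; have k1 := key 1%N.
rewrite !expr0 !expr1 in k0 k1.
rewrite idmxE k0.
by rewrite k1.
Qed.
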